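(* Fix $\tau$ with $0<\tau\le\frac1{8d^2}$ and a slack vector $\nu$ with $\|\nu\|_\infty\le\frac1{4d}$. (1) If $\Gamma\in\mathbb L_2^\nu$, then there exists $\Gamma'\in\mathbb L_2$ such that $\Gamma'_i(x_i)\ge\tau$ for all $i\in\mathcal V$, $x_i\in\chi$, $\Gamma'_{ij}(x_i,x_j)\ge\tau$ for all $ij\in\mathcal E$, $x_i,x_j\in\chi$, and $\|\Gamma-\Gamma'\|_1\le2\|\nu\|_1+2(|\mathcal E|+n)d^2\tau$. (2) If $\Gamma\in\mathbb L_2$, then there exists $\Gamma'\in\mathbb L_2^\nu$ such that $\Gamma'_i(x_i)\ge\tau$ for all $i,x_i$, $\Gamma'_{ij}(x_i,x_j)\ge\tau$ for all $ij,x_i,x_j$, and $\|\Gamma-\Gamma'\|_1\le6d\deg(G)\|\nu\|_1+8(|\mathcal E|+n)d^2\tau$.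
   Context: Let $G=(\mathcal V,\mathcal E)$ be a graph with $\mathcal V=\{1,\dots,n\}$, edges ordered pairs $ij$, maximum degree $\deg(G)$, and $\chi=\{0,\dots,d-1\}$; $\Sigma_d$ is the probability simplex in $\mathbb R^d$ and $\mathbb 1$ the all-ones vector. A marginal vector $\Gamma$ consists of $\Gamma_i\in\mathbb R^d$ ($i\in\mathcal V$) and $\Gamma_{ij}\in\mathbb R^{d\times d}$ ($ij\in\mathcal E$); $\|\cdot\|_1$ is the sum of absolute values of all entries and $\|\cdot\|_\infty$ the maximum absolute entry. A slack vector $\nu$ consists of vectors $\nu_{ij},\nu_{ji}\in\mathbb R^d$ for each $ij\in\mathcal E$ with $\nu_{ij}^\top\mathbb 1=\nu_{ji}^\top\mathbb 1=0$. The slack polytope is $\mathbb L_2^\nu=\{\Gamma\ge0:\Gamma_i\in\Sigma_d\ \forall i;\ \Gamma_{ij}\mathbb 1=\Gamma_i+\nu_{ij},\ \Gamma_{ij}^\top\mathbb 1=\Gamma_j+\nu_{ji},\ \mathbb 1^\top\Gamma_{ij}\mathbb 1=1\ \forall ij\in\mathcal E\}$; $\mathbb L_2=\mathbb L_2^0$. *)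

(* Defs.v *)
From HB Require Import structures.
From mathcomp Require Import all_boot all_order all_algebra.
Set Implicit Arguments. Unset Strict Implicit. Unset Printing Implicit Defensive.
Import Order.TTheory GRing.Theory Num.Theory.
Local Open Scope ring_scope.

(* Vertices V = 'I_n, labels chi = 'I_d, edges E : {set 'I_n * 'I_n}
   (ordered pairs ij). *)

Definition simple_edges (n : nat) (E : {set 'I_n * 'I_n}) : Prop :=
  forall e, e \in E -> e.1 != e.2 /\ (e.2, e.1) \notin E.

Definition max_deg (n : nat) (E : {set 'I_n * 'I_n}) : nat :=
  \max_(i < n) #|[set e in E | (e.1 == i) || (e.2 == i)]|.

(* A marginal vector: Gamma_i in R^d (node) and Gamma_ij in R^{d x d} (edge);
   edge components are only relevant for ij in E. *)
Record marg (R : Type) (n d : nat) := Marg {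
  node : 'I_n -> 'I_d -> R ;
  edge : 'I_n -> 'I_n -> 'I_d -> 'I_d -> R }.

(* A slack vector nu: for ij in E, the vectors nu i j (= nu_ij) and
   nu j i (= nu_ji) in R^d, each summing to zero. *)
Definition slack (R : numDomainType) (n d : nat) := 'I_n -> 'I_n -> 'I_d -> R.

Definition is_slack (R : numDomainType) (n d : nat) (E : {set 'I_n * 'I_n})
  (nu : slack R n d) : Prop :=
  forall e, e \in E ->
    \sum_(x < d) nu e.1 e.2 x = 0 /\ \sum_(x < d) nu e.2 e.1 x = 0.

Definition slack_norm1 (R : numDomainType) (n d : nat) (E : {set 'I_n * 'I_n})
  (nu : slack R n d) : R :=
  \sum_(e in E) \sum_(x < d) (`|nu e.1 e.2 x| + `|nu e.2 e.1 x|).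

Definition slack_norminf (R : realDomainType) (n d : nat) (E : {set 'I_n * 'I_n})
  (nu : slack R n d) : R :=
  \big[Num.max/0]_(e in E) \big[Num.max/0]_(x < d)
     Num.max `|nu e.1 e.2 x| `|nu e.2 e.1 x|.

Definition marg_dist1 (R : numDomainType) (n d : nat) (E : {set 'I_n * 'I_n})
  (G G' : marg R n d) : R :=
  \sum_(i < n) \sum_(x < d) `|node G i x - node G' i x|
  + \sum_(e in E) \sum_(x < d) \sum_(y < d)
        `|edge G e.1 e.2 x y - edge G' e.1 e.2 x y|.

Definition in_L2nu (R : numDomainType) (n d : nat) (E : {set 'I_n * 'I_n})
  (nu : slack R n d) (G : marg R n d) : Prop :=
  (forall i x, 0 <= node G i x) /\
  (forall i, \sum_(x < d) node G i x = 1) /\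
  (forall e, e \in E ->
     (forall x y, 0 <= edge G e.1 e.2 x y) /\
     (forall x, \sum_(y < d) edge G e.1 e.2 x y = node G e.1 x + nu e.1 e.2 x) /\
     (forall y, \sum_(x < d) edge G e.1 e.2 x y = node G e.2 y + nu e.2 e.1 y) /\
     \sum_(x < d) \sum_(y < d) edge G e.1 e.2 x y = 1).

Definition zero_slack (R : numDomainType) (n d : nat) : slack R n d :=
  fun _ _ _ => 0.

Definition in_L2 (R : numDomainType) (n d : nat) (E : {set 'I_n * 'I_n})
  (G : marg R n d) : Prop := in_L2nu E (@zero_slack R n d) G.

Definition lower_bounded (R : numDomainType) (n d : nat) (E : {set 'I_n * 'I_n})
  (tau : R) (G : marg R n d) : Prop :=
  (forall i x, tau <= node G i x) /\
  (forall e, e \in E -> forall x y, tau <= edge G e.1 e.2 x y).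

(* Main.v *)
Require Import Defs.
From HB Require Import structures.
From mathcomp Require Import all_boot all_order all_algebra.
From mathcomp Require Import ring lra.
Set Implicit Arguments. Unset Strict Implicit. Unset Printing Implicit Defensive.
Import Order.TTheory GRing.Theory Num.Theory.
Local Open Scope ring_scope.

Definition fs (R : realFieldType) (d : nat) (a r : 'I_d -> R) (x : 'I_d) : R :=
  if 0 < a x then a x / (r x + a x) else 0.

Lemma fs_props (R : realFieldType) (d : nat) (a r : 'I_d -> R) x :
  0 <= r x -> 0 <= r x + a x ->
  [/\ 0 <= fs a r x, fs a r x <= 1, a x <= fs a r x * (r x + a x)
    & fs a r x * (r x + a x) <= `|a x| ].
Proof.
move=> hr hra; rewrite /fs; case: ifP => ha.
  have hpos : 0 < r x + a x by lra.
  rewrite mulfVK ?gt_eqF // lexx (ger0_norm (ltW ha)) lexx; split => //.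
    by rewrite divr_ge0 // ltW.
  by rewrite ler_pdivrMr // mul1r; lra.
move/negbT: ha; rewrite -leNgt => ha.
by rewrite mul0r lexx ler01 normr_ge0; split.
Qed.

Definition fD (R : realFieldType) (d : nat) (A : 'I_d -> 'I_d -> R) (r c a b : 'I_d -> R)
  (x y : 'I_d) : R := A x y * Num.max (fs a r x) (fs b c y).
Definition fp (R : realFieldType) (d : nat) (A : 'I_d -> 'I_d -> R) (r c a b : 'I_d -> R)
  (x : 'I_d) : R := \sum_(y < d) fD A r c a b x y - a x.
Definition fq (R : realFieldType) (d : nat) (A : 'I_d -> 'I_d -> R) (r c a b : 'I_d -> R)
  (y : 'I_d) : R := \sum_(x < d) fD A r c a b x y - b y.
Definition fixB (R : realFieldType) (d : nat) (A : 'I_d -> 'I_d -> R) (r c a b : 'I_d -> R)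
  (x y : 'I_d) : R :=
  A x y - fD A r c a b x y + fp A r c a b x * fq A r c a b y / \sum_(z < d) fp A r c a b z.

Lemma div_self_mul (R : realFieldType) (u S : R) : (S = 0 -> u = 0) -> u * S / S = u.
Proof.
move=> h; have [S0|nz] := eqVneq S 0; first by rewrite (h S0) !mul0r.
by rewrite mulfK.
Qed.

Lemma sum_ge0_eq0 (R : realFieldType) (d : nat) (f : 'I_d -> R) z :
  (forall x, 0 <= f x) -> \sum_(x < d) f x = 0 -> f z = 0.
Proof.
move=> h0 hs; apply/eqP; rewrite eq_le h0 andbT -hs (bigD1 z) //= lerDl.
by rewrite sumr_ge0.
Qed.

Lemma fix_lemma (R : realFieldType) (d : nat) (A : 'I_d -> 'I_d -> R) (r c a b : 'I_d -> R) :
  (forall x y, 0 <= A x y) -> (forall x, 0 <= r x) -> (forall y, 0 <= c y) ->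
  (forall x, \sum_(y < d) A x y = r x + a x) ->
  (forall y, \sum_(x < d) A x y = c y + b y) ->
  \sum_(x < d) a x = 0 -> \sum_(y < d) b y = 0 ->
  (forall x y, 0 <= fixB A r c a b x y) /\
  (forall x, \sum_(y < d) fixB A r c a b x y = r x) /\
  (forall y, \sum_(x < d) fixB A r c a b x y = c y) /\
  \sum_(x < d) \sum_(y < d) `|A x y - fixB A r c a b x y|
     <= 2 * (\sum_(x < d) `|a x| + \sum_(y < d) `|b y|).
Proof.
move=> hA hr hc hrow hcol ha hb.
have hra x : 0 <= r x + a x by rewrite -hrow sumr_ge0.
have hcb y : 0 <= c y + b y by rewrite -hcol sumr_ge0.
have hs x := fs_props (hr x) (hra x).
have ht y := fs_props (hc y) (hcb y).
set D := fD A r c a b.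
have hD0 x y : 0 <= D x y.
  rewrite /D /fD mulr_ge0 //; have [? ? ? ?] := hs x; rewrite le_max; by apply/orP; left.
have hDA x y : D x y <= A x y.
  rewrite /D /fD ler_piMr // ge_max; have [? ? ? ?] := hs x; have [? ? ? ?] := ht y.
  by apply/andP.
have hDsum x y : D x y <= A x y * fs a r x + A x y * fs b c y.
  rewrite /D /fD -mulrDr ler_wpM2l //; have [? ? ? ?] := hs x; have [? ? ? ?] := ht y.
  by rewrite ge_max; apply/andP; split; lra.
set p := fp A r c a b; set q := fq A r c a b.
have hp x : 0 <= p x.
  rewrite /p /fp subr_ge0; have [? ? h ?] := hs x; apply: (le_trans h).
  rewrite mulrC -hrow mulr_suml; apply: ler_sum => y _.
  by rewrite /D /fD ler_wpM2l // le_max lexx.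
have hq y : 0 <= q y.
  rewrite /q /fq subr_ge0; have [? ? h ?] := ht y; apply: (le_trans h).
  rewrite mulrC -hcol mulr_suml; apply: ler_sum => x _.
  by rewrite /D /fD ler_wpM2l // le_max lexx orbT.
set T := \sum_(x < d) \sum_(y < d) D x y.
have hSp : \sum_(x < d) p x = T by rewrite /p /fp sumrB ha subr0.
have hSq : \sum_(y < d) q y = T by rewrite /q /fq sumrB hb subr0 /T exchange_big.
have hT : T <= \sum_(x < d) `|a x| + \sum_(y < d) `|b y|.
  apply: (le_trans (y := \sum_(x < d) \sum_(y < d) (A x y * fs a r x + A x y * fs b c y))).
    by apply: ler_sum => x _; apply: ler_sum => y _; apply: hDsum.
  rewrite (eq_bigr (fun x => \sum_(y < d) A x y * fs a r x + \sum_(y < d) A x y * fs b c y));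
    last by move=> x _; rewrite big_split.
  rewrite big_split /= lerD //.
    apply: ler_sum => x _; rewrite -mulr_suml hrow mulrC; by have [? ? ? ?] := hs x.
  rewrite exchange_big /=; apply: ler_sum => y _; rewrite -mulr_suml hcol mulrC.
  by have [? ? ? ?] := ht y.
have hpT x : p x * T / T = p x.
  by apply: div_self_mul => hT0; apply: (@sum_ge0_eq0 _ _ p x hp); rewrite hSp.
have hqT y : q y * T / T = q y.
  by apply: div_self_mul => hT0; apply: (@sum_ge0_eq0 _ _ q y hq); rewrite hSq.
have hB x y : fixB A r c a b x y = A x y - D x y + p x * q y / T.
  by rewrite /fixB -/D -/p -/q hSp.
split; [|split; [|split]].
- move=> x y; rewrite hB addr_ge0 ?subr_ge0 //.
  by rewrite divr_ge0 ?mulr_ge0 // -hSp sumr_ge0.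
- move=> x; under eq_bigr do rewrite hB.
  rewrite big_split sumrB /= hrow -mulr_suml -mulr_sumr hSq hpT /p /fp -/D; ring.
- move=> y; under eq_bigr do rewrite hB.
  rewrite big_split sumrB /= hcol.
  rewrite -mulr_suml -mulr_suml hSp [T * _]mulrC hqT /q /fq -/D; ring.
- apply: (le_trans (y := T + T)); last by lra.
  apply: (le_trans (y := \sum_(x < d) \sum_(y < d) (D x y + p x * q y / T))).
    apply: ler_sum => x _; apply: ler_sum => y _; rewrite hB.
    rewrite (_ : A x y - (A x y - D x y + p x * q y / T) = D x y - p x * q y / T); last by ring.
    apply: (le_trans (ler_normB _ _)); rewrite ger0_norm // ger0_norm //.
    by rewrite divr_ge0 ?mulr_ge0 // -hSp sumr_ge0.
  rewrite (eq_bigr (fun x => \sum_(y < d) D x y + p x * (\sum_(y < d) q y) / T)).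
    rewrite big_split /= lerD // hSq.
    rewrite -mulr_suml -mulr_suml hSp.
    have [->|nz] := eqVneq T 0; first by rewrite mulr0 mul0r.
    by rewrite mulfK.
  move=> x _; rewrite big_split /= mulr_sumr mulr_suml; congr (_ + _).
Qed.

Lemma sum_constd (R : realFieldType) (d : nat) (k : R) : \sum_(x < d) k = k * d%:R.
Proof. by rewrite sumr_const card_ord mulr_natr. Qed.

Definition e2p (R : realFieldType) (d : nat) (g v : 'I_d -> R) (al be : R) (x : 'I_d) : R :=
  (be - al) * g x + al / d%:R + v x.

Definition E2 (R : realFieldType) (d : nat) (A : 'I_d -> 'I_d -> R) (g1 g2 v1 v2 : 'I_d -> R)
  (a1 a2 : R) (x y : 'I_d) : R :=
  (1 - Num.max a1 a2) * A x y
  + e2p g1 v1 a1 (Num.max a1 a2) x * e2p g2 v2 a2 (Num.max a1 a2) y / Num.max a1 a2.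

Lemma sum_e2p (R : realFieldType) (d : nat) (g v : 'I_d -> R) (al be : R) :
  (0 < d)%N -> \sum_(x < d) g x = 1 -> \sum_(x < d) v x = 0 ->
  \sum_(x < d) e2p g v al be x = be.
Proof.
move=> hd hg hv; rewrite /e2p !big_split /= -mulr_sumr hg hv sum_constd divfK.
  by ring.
by rewrite pnatr_eq0 -lt0n.
Qed.

Lemma edge2 (R : realFieldType) (d : nat) (A : 'I_d -> 'I_d -> R) (g1 g2 v1 v2 : 'I_d -> R)
  (a1 a2 tau : R) : (0 < d)%N ->
  (forall x y, 0 <= A x y) ->
  (forall x, \sum_(y < d) A x y = g1 x) -> (forall y, \sum_(x < d) A x y = g2 y) ->
  \sum_(x < d) g1 x = 1 -> \sum_(y < d) g2 y = 1 ->
  \sum_(x < d) v1 x = 0 -> \sum_(y < d) v2 y = 0 ->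
  (forall x, `|v1 x| * (2 * d%:R) <= a1) -> (forall y, `|v2 y| * (2 * d%:R) <= a2) ->
  0 < tau -> 4 * d%:R ^+ 2 * tau <= a1 -> 4 * d%:R ^+ 2 * tau <= a2 ->
  a1 <= 1 -> a2 <= 1 ->
  (forall x y, tau <= E2 A g1 g2 v1 v2 a1 a2 x y) /\
  (forall x, \sum_(y < d) E2 A g1 g2 v1 v2 a1 a2 x y = (1 - a1) * g1 x + a1 / d%:R + v1 x) /\
  (forall y, \sum_(x < d) E2 A g1 g2 v1 v2 a1 a2 x y = (1 - a2) * g2 y + a2 / d%:R + v2 y) /\
  \sum_(x < d) \sum_(y < d) `|A x y - E2 A g1 g2 v1 v2 a1 a2 x y| <= 2 * Num.max a1 a2.
Proof.
move=> hd hA hrow hcol hg1 hg2 hv1 hv2 hm1 hm2 ht ha1 ha2 ha11 ha21.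
have dpos : 0 < d%:R :> R by rewrite ltr0n.
have d0 : d%:R != 0 :> R by rewrite gt_eqF.
have d2pos : 0 < 4 * d%:R ^+ 2 * tau :> R by rewrite !mulr_gt0 ?exprn_gt0.
set be := Num.max a1 a2.
have hb1 : a1 <= be by rewrite le_max lexx.
have hb2 : a2 <= be by rewrite le_max lexx orbT.
have hbpos : 0 < be by apply: lt_le_trans hb1; apply: lt_le_trans ha1.
have hb1' : be <= 1 by rewrite ge_max ha11 ha21.
have hg1p x : 0 <= g1 x by rewrite -hrow sumr_ge0.
have hg2p y : 0 <= g2 y by rewrite -hcol sumr_ge0.
set p := e2p g1 v1 a1 be; set q := e2p g2 v2 a2 be.
have hp x : a1 / (2 * d%:R) <= p x.
  rewrite /p /e2p.
  have h1 : 0 <= (be - a1) * g1 x by rewrite mulr_ge0 // subr_ge0.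
  have h2 : - `|v1 x| <= v1 x by rewrite lerNnormlW.
  have h3 : `|v1 x| <= a1 / (2 * d%:R) by rewrite ler_pdivlMr ?mulr_gt0.
  have h4 : a1 / d%:R = 2 * (a1 / (2 * d%:R)) by field.
  lra.
have hq y : a2 / (2 * d%:R) <= q y.
  rewrite /q /e2p.
  have h1 : 0 <= (be - a2) * g2 y by rewrite mulr_ge0 // subr_ge0.
  have h2 : - `|v2 y| <= v2 y by rewrite lerNnormlW.
  have h3 : `|v2 y| <= a2 / (2 * d%:R) by rewrite ler_pdivlMr ?mulr_gt0.
  have h4 : a2 / d%:R = 2 * (a2 / (2 * d%:R)) by field.
  lra.
have hP : 0 <= a1 / (2 * d%:R) by rewrite divr_ge0 ?mulr_ge0 //; lra.
have hQ : 0 <= a2 / (2 * d%:R) by rewrite divr_ge0 ?mulr_ge0 //; lra.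
have hpq x y : 0 <= p x * q y / be.
  rewrite divr_ge0 ?(ltW hbpos) // mulr_ge0 //; [exact: le_trans hP (hp x) | exact: le_trans hQ (hq y)].
have hSp : \sum_(x < d) p x = be by apply: sum_e2p.
have hSq : \sum_(y < d) q y = be by apply: sum_e2p.
split; [|split; [|split]].
- move=> x y; rewrite /E2 -/be -/p -/q.
  have h0 : 0 <= (1 - be) * A x y by rewrite mulr_ge0 // subr_ge0.
  suff : tau <= p x * q y / be by lra.
  rewrite ler_pdivlMr //.
  apply: (le_trans (y := a1 / (2 * d%:R) * (a2 / (2 * d%:R)))); last first.
    by apply: ler_pM => //.
  have -> : a1 / (2 * d%:R) * (a2 / (2 * d%:R)) = a1 * a2 / (4 * d%:R ^+ 2) by field.
  rewrite ler_pdivlMr ?mulr_gt0 ?exprn_gt0 //.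
  rewrite /be; have [hle|hlt] := leP a1 a2.
    rewrite mulrAC; apply: ler_wpM2r; [lra | rewrite mulrC; lra].
  rewrite mulrAC [a1 * a2]mulrC; apply: ler_wpM2r; [lra | rewrite mulrC; lra].
- move=> x; rewrite /E2 -/be -/p -/q big_split /= -mulr_sumr hrow.
  rewrite -mulr_suml -mulr_sumr hSq mulfK ?gt_eqF // /p /e2p; ring.
- move=> y; rewrite /E2 -/be -/p -/q big_split /= -mulr_sumr hcol.
  rewrite -mulr_suml -mulr_suml hSp [be * _]mulrC mulfK ?gt_eqF // /q /e2p; ring.
- apply: (le_trans (y := \sum_(x < d) \sum_(y < d) (be * A x y + p x * q y / be))).
    apply: ler_sum => x _; apply: ler_sum => y _; rewrite /E2 -/be -/p -/q.
    rewrite (_ : A x y - ((1 - be) * A x y + p x * q y / be) = be * A x y - p x * q y / be);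
      last by ring.
    apply: (le_trans (ler_normB _ _)); rewrite ger0_norm ?mulr_ge0 ?(ltW hbpos) // ger0_norm //.
  rewrite (eq_bigr (fun x => be * g1 x + p x * (\sum_(y < d) q y) / be)).
    rewrite big_split /= -mulr_sumr hg1 hSq -mulr_suml -mulr_suml hSp mulfK ?gt_eqF //.
    lra.
  move=> x _; rewrite big_split /= -mulr_sumr hrow mulr_sumr mulr_suml; congr (_ + _).
Qed.
Lemma mix_node (R : realFieldType) (d : nat) (g : 'I_d -> R) (eps : R) :
  (0 < d)%N -> 0 <= eps -> (forall x, 0 <= g x) -> \sum_(x < d) g x = 1 ->
  \sum_(x < d) `|g x - ((1 - eps) * g x + eps / d%:R)| <= 2 * eps.
Proof.
move=> hd he hg hs.
have d0 : d%:R != 0 :> R by rewrite pnatr_eq0 -lt0n.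
have dpos : 0 < d%:R :> R by rewrite ltr0n.
apply: (le_trans (y := \sum_(x < d) (eps * g x + eps / d%:R))).
  apply: ler_sum => x _.
  rewrite (_ : g x - ((1 - eps) * g x + eps / d%:R) = eps * g x - eps / d%:R); last by ring.
  apply: (le_trans (ler_normB _ _)).
  rewrite ger0_norm ?mulr_ge0 // ger0_norm // divr_ge0 // ltW //.
rewrite big_split /= -mulr_sumr hs sum_constd divfK //; lra.
Qed.

Lemma mix_edge (R : realFieldType) (d : nat) (A B : 'I_d -> 'I_d -> R) (eps : R) :
  (0 < d)%N -> 0 <= eps -> (forall x y, 0 <= B x y) ->
  \sum_(x < d) \sum_(y < d) B x y = 1 ->
  \sum_(x < d) \sum_(y < d) `|A x y - ((1 - eps) * B x y + eps / d%:R ^+ 2)|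
   <= \sum_(x < d) \sum_(y < d) `|A x y - B x y| + 2 * eps.
Proof.
move=> hd he hg hs.
have d0 : d%:R != 0 :> R by rewrite pnatr_eq0 -lt0n.
have dpos : 0 < d%:R :> R by rewrite ltr0n.
apply: (le_trans (y := \sum_(x < d) \sum_(y < d) (`|A x y - B x y| + (eps * B x y + eps / d%:R ^+ 2)))).
  apply: ler_sum => x _; apply: ler_sum => y _.
  rewrite (_ : A x y - ((1 - eps) * B x y + eps / d%:R ^+ 2) =
     (A x y - B x y) + (eps * B x y - eps / d%:R ^+ 2)); last by ring.
  apply: (le_trans (ler_normD _ _)); rewrite lerD2l.
  apply: (le_trans (ler_normB _ _)).
  rewrite ger0_norm ?mulr_ge0 // ger0_norm // divr_ge0 // exprn_ge0 // ltW //.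
rewrite (eq_bigr (fun x => \sum_(y < d) `|A x y - B x y| + (eps * \sum_(y < d) B x y + eps / d%:R))).
  rewrite big_split /= lerD2l big_split /= -mulr_sumr hs sum_constd divfK //; lra.
move=> x _; rewrite big_split /= big_split /= -mulr_sumr sum_constd.
congr (_ + (_ + _)); by field.
Qed.

Lemma part1 (R : realFieldType) (n d : nat) (E : {set 'I_n * 'I_n})
  (tau : R) (nu : slack R n d) : (0 < d)%N ->
  0 < tau -> tau <= (8 * d%:R ^+ 2)^-1 ->
  is_slack E nu ->
  (forall G : marg R n d, in_L2nu E nu G ->
     exists G' : marg R n d, in_L2 E G' /\ lower_bounded E tau G' /\
       marg_dist1 E G G' <=
         2 * slack_norm1 E nu + 2 * (#|E| + n)%:R * d%:R ^+ 2 * tau).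
Proof.
move=> hd ht htau hsl G [hn0 [hn1 hedge]].
have d0 : d%:R != 0 :> R by rewrite pnatr_eq0 -lt0n.
have dpos : 0 < d%:R :> R by rewrite ltr0n.
have d1 : 1 <= d%:R :> R by rewrite ler1n.
set eps := d%:R ^+ 2 * tau.
have he0 : 0 <= eps by rewrite mulr_ge0 ?exprn_ge0 ?ltW.
have hed : 0 <= eps / d%:R by rewrite divr_ge0 // ltW.
have hed2 : 0 <= eps / d%:R ^+ 2 by rewrite divr_ge0 ?exprn_ge0 // ltW.
have he1 : eps <= 1.
  rewrite /eps; move: htau; rewrite -[X in _ <= X]div1r ler_pdivlMr ?mulr_gt0 ?exprn_gt0 //.
  move=> h; have : 0 <= d%:R ^+ 2 * tau :> R by []. lra.
pose B i j := fixB (edge G i j) (node G i) (node G j) (nu i j) (nu j i).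
exists (Marg (fun i x => (1 - eps) * node G i x + eps / d%:R)
             (fun i j x y => (1 - eps) * B i j x y + eps / d%:R ^+ 2)).
have hfix e : e \in E -> _ := fun he =>
  let: conj h1 (conj h2 (conj h3 h4)) := hedge e he in
  let: conj s1 s2 := hsl e he in
  @fix_lemma R d (edge G e.1 e.2) (node G e.1) (node G e.2) (nu e.1 e.2) (nu e.2 e.1)
     h1 (hn0 e.1) (hn0 e.2) h2 h3 s1 s2.
split; [|split].
- split; [|split] => /=.
  + move=> i x; rewrite addr_ge0 // mulr_ge0 // subr_ge0 //.
  + move=> i; rewrite big_split /= -mulr_sumr hn1 sum_constd divfK //; ring.
  + move=> e he; have [f1 [f2 [f3 f4]]] := hfix e he.
    have rowB x : \sum_(y < d) ((1 - eps) * B e.1 e.2 x y + eps / d%:R ^+ 2)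
                  = (1 - eps) * node G e.1 x + eps / d%:R.
      rewrite big_split /= -mulr_sumr f2 sum_constd; congr (_ + _); rewrite expr2 invfM mulrA mulfVK //.
    split; [|split; [|split]].
    * move=> x y; rewrite addr_ge0 // mulr_ge0 ?subr_ge0 //; exact: f1.
    * by move=> x; rewrite rowB /zero_slack addr0.
    * move=> y; rewrite /zero_slack addr0 big_split /= -mulr_sumr f3 sum_constd.
      congr (_ + _); rewrite expr2 invfM mulrA mulfVK //.
    * under eq_bigr do rewrite rowB.
      rewrite big_split /= -mulr_sumr hn1 sum_constd divfK //; ring.
- split => /=.
  + move=> i x.
    have : 0 <= (1 - eps) * node G i x by rewrite mulr_ge0 ?subr_ge0.
    have : tau <= eps / d%:R.
      have -> : eps / d%:R = d%:R * tau by rewrite /eps; field.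
      have : 0 <= (d%:R - 1) * tau by rewrite mulr_ge0 ?subr_ge0 // ltW.
      lra.
    lra.
  + move=> e he x y; have [f1 _] := hfix e he.
    have : 0 <= (1 - eps) * B e.1 e.2 x y by rewrite mulr_ge0 ?subr_ge0 //; exact: f1.
    have : eps / d%:R ^+ 2 = tau by rewrite /eps; field.
    lra.
- rewrite /marg_dist1 /=.
  apply: (le_trans (y := \sum_(i < n) 2 * eps +
     \sum_(e in E) (2 * (\sum_(x < d) (`|nu e.1 e.2 x| + `|nu e.2 e.1 x|)) + 2 * eps))).
    apply: lerD.
      by apply: ler_sum => i _; apply: mix_node.
    apply: ler_sum => e he; have [f1 [f2 [f3 f4]]] := hfix e he.
    apply: (le_trans (mix_edge _ hd he0 f1 _)).
      by rewrite exchange_big /=; under eq_bigr do rewrite f3; rewrite hn1.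
    by rewrite lerD2r big_split.
  rewrite big_split /= sumr_const card_ord -mulr_sumr sumr_const -/(slack_norm1 E nu).
  rewrite -mulr_natr -mulr_natr natrD /eps; lra.
Qed.
Lemma bigmax_le_sum (R : realFieldType) (I : finType) (P : pred I) (F : I -> R) :
  (forall i, P i -> 0 <= F i) -> \big[Num.max/0]_(i | P i) F i <= \sum_(i | P i) F i.
Proof.
move=> h; apply: bigmax_le; first exact: sumr_ge0.
move=> j Pj; rewrite (bigD1 j) //= lerDl sumr_ge0 // => i /andP [Pi _]; exact: h.
Qed.

Lemma half_bound (R : realFieldType) (d : nat) (v : 'I_d -> R) z :
  \sum_(x < d) v x = 0 -> `|v z| * 2 <= \sum_(x < d) `|v x|.
Proof.
move=> hs; rewrite (bigD1 z) //=.
have : v z = - \sum_(x < d | x != z) v x by move: hs; rewrite (bigD1 z) //=; lra.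
move=> ->; rewrite normrN.
have := ler_norm_sum (index_enum _) (fun x => v x) (fun x => x != z).
lra.
Qed.

Lemma sum_if_eq (R : realFieldType) (n : nat) (j : 'I_n) (c : R) :
  \sum_(i < n) (if j == i then c else 0) = c.
Proof.
rewrite (bigD1 j) //= eqxx big1 ?addr0 // => i /negPf; rewrite eq_sym => ->; done.
Qed.

Definition mv (R : realFieldType) (n d : nat) (E : {set 'I_n * 'I_n}) (nu : slack R n d)
  (i : 'I_n) : R :=
  \big[Num.max/0]_(e in E) \big[Num.max/0]_(x < d)
     (if e.1 == i then `|nu e.1 e.2 x| else if e.2 == i then `|nu e.2 e.1 x| else 0).

Lemma mv_ge0 (R : realFieldType) (n d : nat) (E : {set 'I_n * 'I_n}) (nu : slack R n d) i :
  0 <= mv E nu i.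
Proof. exact: bigmax_ge_id. Qed.

Lemma mv_le_inf (R : realFieldType) (n d : nat) (E : {set 'I_n * 'I_n}) (nu : slack R n d) i :
  mv E nu i <= slack_norminf E nu.
Proof.
have h0 : 0 <= slack_norminf E nu by exact: bigmax_ge_id.
apply: bigmax_le => // e he; apply: bigmax_le => // x _.
apply: (le_trans _ (le_bigmax_cond _ _ he)).
apply: (le_trans _ (le_bigmax _ _ x)).
case: ifP => _; first by rewrite le_max lexx.
case: ifP => _; first by rewrite le_max lexx orbT.
by rewrite le_max normr_ge0.
Qed.

Lemma mv_bound (R : realFieldType) (n d : nat) (E : {set 'I_n * 'I_n}) (nu : slack R n d) e x :
  simple_edges E -> e \in E ->
  `|nu e.1 e.2 x| <= mv E nu e.1 /\ `|nu e.2 e.1 x| <= mv E nu e.2.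
Proof.
move=> hs he; have [hne _] := hs e he.
split.
  apply: (le_trans _ (le_bigmax_cond _ _ he)).
  by apply: (le_trans _ (le_bigmax _ _ x)); rewrite eqxx.
apply: (le_trans _ (le_bigmax_cond _ _ he)).
by apply: (le_trans _ (le_bigmax _ _ x)); rewrite (negPf hne) eqxx.
Qed.

Lemma sum_mv (R : realFieldType) (n d : nat) (E : {set 'I_n * 'I_n}) (nu : slack R n d) :
  is_slack E nu ->
  (\sum_(i < n) mv E nu i) * 2 <= slack_norm1 E nu.
Proof.
move=> hsl.
pose h (e : 'I_n * 'I_n) (i : 'I_n) :=
  (if e.1 == i then \sum_(x < d) `|nu e.1 e.2 x| else 0)
  + (if e.2 == i then \sum_(x < d) `|nu e.2 e.1 x| else 0).
have hh0 e i : 0 <= h e i.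
  by rewrite /h addr_ge0 //; case: ifP => _ //; apply: sumr_ge0.
have step i : mv E nu i * 2 <= \sum_(e in E) h e i.
  rewrite mulrC -ler_pdivlMl ?ltr0Sn // mulr_sumr.
  apply: (le_trans (bigmax_le_sum _)).
    by move=> e _; apply: bigmax_ge_id.
  apply: ler_sum => e he; apply: bigmax_le.
    by rewrite mulr_ge0 ?invr_ge0 ?ler0n.
  move=> x _; rewrite ler_pdivlMl ?ltr0Sn // /h.
  have [s1 s2] := hsl e he.
  have b1 := half_bound x s1; have b2 := half_bound x s2.
  have z1 : 0 <= \sum_(x0 < d) `|nu e.1 e.2 x0| by apply: sumr_ge0.
  have z2 : 0 <= \sum_(x0 < d) `|nu e.2 e.1 x0| by apply: sumr_ge0.
  have z3 := normr_ge0 (nu e.1 e.2 x); have z4 := normr_ge0 (nu e.2 e.1 x).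
  by case: (e.1 == i); case: (e.2 == i) => /=; lra.
apply: (le_trans (y := \sum_(i < n) \sum_(e in E) h e i)).
  rewrite mulr_suml; exact: ler_sum.
rewrite exchange_big /=; apply: ler_sum => e _.
by rewrite /h big_split /= !sum_if_eq big_split.
Qed.

Lemma sum_edges_mv (R : realFieldType) (n d : nat) (E : {set 'I_n * 'I_n}) (nu : slack R n d) :
  simple_edges E ->
  \sum_(e in E) (mv E nu e.1 + mv E nu e.2) <= (max_deg E)%:R * \sum_(i < n) mv E nu i.
Proof.
move=> hs.
rewrite (eq_bigr (fun e => \sum_(i < n) (if (e.1 == i) || (e.2 == i) then mv E nu i else 0)));
  last first.
  move=> e he; have [hne _] := hs e he.
  rewrite -(sum_if_eq e.1 (mv E nu e.1)) -(sum_if_eq e.2 (mv E nu e.2)) -big_split /=.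
  apply: eq_bigr => i _.
  have hne' : (e.2 == e.1) = false by rewrite eq_sym (negPf hne).
  case: (eqVneq e.1 i) => [<-|h1]; first by rewrite hne' /= addr0.
  by case: (eqVneq e.2 i) => [<-|h2] /=; rewrite ?add0r ?addr0.
rewrite exchange_big /= mulr_sumr; apply: ler_sum => i _.
have -> : \sum_(e in E) (if (e.1 == i) || (e.2 == i) then mv E nu i else 0)
          = \sum_(e in [set e in E | (e.1 == i) || (e.2 == i)]) mv E nu i.
  rewrite big_mkcond [RHS]big_mkcond /=; apply: eq_bigr => e _.
  by rewrite inE; case: (e \in E).
rewrite sumr_const -[mv E nu i *+ _]mulr_natl ler_wpM2r ?mv_ge0 // ler_nat.
rewrite /max_deg; exact: (@leq_bigmax _ (fun j => #|[set e in E | (e.1 == j) || (e.2 == j)]|) i).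
Qed.

Lemma sum_mv_deg (R : realFieldType) (n d : nat) (E : {set 'I_n * 'I_n}) (nu : slack R n d) :
  \sum_(i < n) mv E nu i <= (max_deg E)%:R * \sum_(i < n) mv E nu i.
Proof.
have [E0|[e he]] := set_0Vmem E.
  rewrite big1 ?mulr0 // => i _; rewrite /mv E0 big_set0 //.
have hS : 0 <= \sum_(i < n) mv E nu i by apply: sumr_ge0 => i _; apply: mv_ge0.
rewrite ler_peMl // ler1n.
apply: (leq_trans _ (@leq_bigmax _ (fun i => #|[set e in E | (e.1 == i) || (e.2 == i)]|) e.1)).
by rewrite card_gt0; apply/set0Pn; exists e; rewrite inE he eqxx.
Qed.

Lemma part2 (R : realFieldType) (n d : nat) (E : {set 'I_n * 'I_n})
  (tau : R) (nu : slack R n d) : (0 < d)%N ->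
  simple_edges E ->
  0 < tau -> tau <= (8 * d%:R ^+ 2)^-1 ->
  is_slack E nu -> slack_norminf E nu <= (4 * d%:R)^-1 ->
  (forall G : marg R n d, in_L2 E G ->
     exists G' : marg R n d, in_L2nu E nu G' /\ lower_bounded E tau G' /\
       marg_dist1 E G G' <=
         6 * d%:R * (max_deg E)%:R * slack_norm1 E nu
         + 8 * (#|E| + n)%:R * d%:R ^+ 2 * tau).
Proof.
move=> hd hsimp ht htau hsl hinf G [hn0 [hn1 hedge]].
have d0 : d%:R != 0 :> R by rewrite pnatr_eq0 -lt0n.
have dpos : 0 < d%:R :> R by rewrite ltr0n.
have d1 : 1 <= d%:R :> R by rewrite ler1n.
set t4 := 4 * d%:R ^+ 2 * tau.
have ht4 : 0 < t4 by rewrite /t4 !mulr_gt0 // exprn_gt0.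
have ht4' : t4 <= 1 / 2.
  move: htau; rewrite -[X in _ <= X]div1r ler_pdivlMr ?mulr_gt0 ?exprn_gt0 // /t4 => h.
  lra.
have hd1 : d%:R * tau <= t4.
  rewrite /t4 expr2.
  have h2 : 0 <= d%:R * tau by rewrite mulr_ge0 // ltW.
  have h1 : 0 <= (4 * d%:R - 1) * (d%:R * tau) by rewrite mulr_ge0 //; lra.
  have -> : 4 * (d%:R * d%:R) * tau = d%:R * tau + (4 * d%:R - 1) * (d%:R * tau) by ring.
  lra.
pose m := mv E nu.
pose al i := 2 * d%:R * m i + t4.
have hm0 i : 0 <= m i by apply: mv_ge0.
have hm1 i : 2 * d%:R * m i <= 1 / 2.
  have := le_trans (mv_le_inf E nu i) hinf.
  rewrite -[X in _ <= X]div1r ler_pdivlMr ?mulr_gt0 // => h; rewrite /m; lra.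
have hal1 i : al i <= 1 by have := hm1 i; rewrite /al; lra.
have hal0 i : t4 <= al i.
  have : 0 <= 2 * d%:R * m i by rewrite !mulr_ge0 // ltW.
  rewrite /al; lra.
have hald i : 0 <= al i / d%:R by rewrite divr_ge0 ?ltW // (lt_le_trans ht4 (hal0 i)).
pose node' i x := (1 - al i) * node G i x + al i / d%:R.
pose edge' i j := E2 (edge G i j) (node G i) (node G j) (nu i j) (nu j i) (al i) (al j).
exists (Marg node' edge').
have hE e : e \in E ->
  (forall x y, tau <= edge' e.1 e.2 x y) /\
  (forall x, \sum_(y < d) edge' e.1 e.2 x y = node' e.1 x + nu e.1 e.2 x) /\
  (forall y, \sum_(x < d) edge' e.1 e.2 x y = node' e.2 y + nu e.2 e.1 y) /\
  \sum_(x < d) \sum_(y < d) `|edge G e.1 e.2 x y - edge' e.1 e.2 x y|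
     <= 2 * Num.max (al e.1) (al e.2).
  move=> he; have [h1 [h2 [h3 h4]]] := hedge e he; have [s1 s2] := hsl e he.
  have r1 x : \sum_(y < d) edge G e.1 e.2 x y = node G e.1 x by rewrite h2 /zero_slack addr0.
  have r2 y : \sum_(x < d) edge G e.1 e.2 x y = node G e.2 y by rewrite h3 /zero_slack addr0.
  have b1 x : `|nu e.1 e.2 x| * (2 * d%:R) <= al e.1.
    have [k _] := mv_bound nu x hsimp he; have := hm0 e.1.
    have : `|nu e.1 e.2 x| * (2 * d%:R) <= m e.1 * (2 * d%:R) by rewrite ler_wpM2r ?mulr_ge0 // ltW.
    rewrite /al; lra.
  have b2 y : `|nu e.2 e.1 y| * (2 * d%:R) <= al e.2.
    have [_ k] := mv_bound nu y hsimp he; have := hm0 e.2.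
    have : `|nu e.2 e.1 y| * (2 * d%:R) <= m e.2 * (2 * d%:R) by rewrite ler_wpM2r ?mulr_ge0 // ltW.
    rewrite /al; lra.
  have [k1 [k2 [k3 k4]]] := @edge2 R d (edge G e.1 e.2) (node G e.1) (node G e.2) (nu e.1 e.2) (nu e.2 e.1)
    (al e.1) (al e.2) tau hd h1 r1 r2 (hn1 e.1) (hn1 e.2) s1 s2 b1 b2 ht (hal0 e.1) (hal0 e.2)
    (hal1 e.1) (hal1 e.2).
  by split; [exact: k1 | split; [exact: k2 | split; [exact: k3 | exact: k4]]].
have hn1' i : \sum_(x < d) node' i x = 1.
  by rewrite /node' big_split /= -mulr_sumr hn1 sum_constd divfK //; ring.
have hmax e : Num.max (al e.1) (al e.2) <= al e.1 + al e.2 - t4.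
  have := hal0 e.1; have := hal0 e.2.
  move=> h2 h1; case: (leP (al e.1) (al e.2)) => h; lra.
split; [|split].
- split; [|split] => /=.
  + move=> i x; rewrite /node' addr_ge0 // mulr_ge0 // subr_ge0 //.
  + exact: hn1'.
  + move=> e he; have [k1 [k2 [k3 k4]]] := hE e he; split; [|split; [|split]].
    * move=> x y; exact: le_trans (ltW ht) (k1 x y).
    * exact: k2.
    * exact: k3.
    * under eq_bigr do rewrite k2.
      have [s1 _] := hsl e he.
      by rewrite big_split /= hn1' s1 addr0.
- split => /=.
  + move=> i x; rewrite /node'.
    have : 0 <= (1 - al i) * node G i x by rewrite mulr_ge0 // subr_ge0.
    have : tau <= al i / d%:R.
      rewrite ler_pdivlMr // mulrC; have := hal0 i; lra.
    lra.
  + by move=> e he x y; have [k1 _] := hE e he.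
- rewrite /marg_dist1 /=.
  apply: (le_trans (y := \sum_(i < n) (2 * al i) +
     \sum_(e in E) (2 * (al e.1 + al e.2 - t4)))).
    apply: lerD.
      apply: ler_sum => i _; apply: mix_node => //.
      exact: le_trans (ltW ht4) (hal0 i).
    apply: ler_sum => e he; have [_ [_ [_ k4]]] := hE e he.
    apply: (le_trans k4); rewrite ler_pM2l //; exact: hmax.
  have e1 : \sum_(i < n) (2 * al i) = 4 * d%:R * \sum_(i < n) m i + 2 * t4 * n%:R.
    rewrite (eq_bigr (fun i => 4 * d%:R * m i + 2 * t4)); last by move=> i _; rewrite /al; ring.
    by rewrite big_split /= sumr_const card_ord -mulr_sumr -[2 * t4 *+ n]mulr_natr.
  have e2 : \sum_(e in E) (2 * (al e.1 + al e.2 - t4))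
        = 4 * d%:R * \sum_(e in E) (m e.1 + m e.2) + 2 * t4 * #|E|%:R.
    rewrite (eq_bigr (fun e => 4 * d%:R * (m e.1 + m e.2) + 2 * t4)); last first.
      by move=> e _; rewrite /al; ring.
    by rewrite big_split /= sumr_const -mulr_sumr -[2 * t4 *+ #|E|]mulr_natr.
  rewrite e1 e2.
  have F4 := sum_mv hsl.
  have F5 := sum_edges_mv nu hsimp.
  have F6 := sum_mv_deg E nu.
  set S := \sum_(i < n) mv E nu i in F4 F5 F6.
  set SE := \sum_(e in E) (mv E nu e.1 + mv E nu e.2) in F5.
  have -> : \sum_(i < n) m i = S by [].
  have -> : \sum_(e in E) (m e.1 + m e.2) = SE by [].
  set D := (max_deg E)%:R in F5 F6 *.
  set N := slack_norm1 E nu in F4 *.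
  have hD : 0 <= D by rewrite /D ler0n.
  have hN : 0 <= N by rewrite /N; apply: sumr_ge0 => e _; apply: sumr_ge0 => x _; apply: addr_ge0.
  have hS : 0 <= S by apply: sumr_ge0.
  have g1 : d%:R * SE <= d%:R * (D * S) by rewrite ler_wpM2l // ltW.
  have g2 : d%:R * S <= d%:R * (D * S) by rewrite ler_wpM2l // ltW.
  have g3 : d%:R * D * (S * 2) <= d%:R * D * N by rewrite ler_wpM2l // mulr_ge0 // ltW.
  have g4 : 0 <= d%:R * D * N by rewrite !mulr_ge0 // ltW.
  rewrite natrD /t4.
  lra.
Qed.

Theorem lemma8 (R : realFieldType) (n d : nat) (E : {set 'I_n * 'I_n})
  (tau : R) (nu : slack R n d) :
  simple_edges E ->
  0 < tau -> tau <= (8 * d%:R ^+ 2)^-1 ->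
  is_slack E nu -> slack_norminf E nu <= (4 * d%:R)^-1 ->
  (forall G : marg R n d, in_L2nu E nu G ->
     exists G' : marg R n d, in_L2 E G' /\ lower_bounded E tau G' /\
       marg_dist1 E G G' <=
         2 * slack_norm1 E nu + 2 * (#|E| + n)%:R * d%:R ^+ 2 * tau) /\
  (forall G : marg R n d, in_L2 E G ->
     exists G' : marg R n d, in_L2nu E nu G' /\ lower_bounded E tau G' /\
       marg_dist1 E G G' <=
         6 * d%:R * (max_deg E)%:R * slack_norm1 E nu
         + 8 * (#|E| + n)%:R * d%:R ^+ 2 * tau).
Proof.
move=> hs ht htau hsl hinf.
have hd : (0 < d)%N.
  rewrite lt0n; apply/negP => /eqP d0; move: htau; rewrite d0 mulr0n expr2 !mulr0 invr0.
  by rewrite leNgt ht.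
split; [exact: part1 | exact: part2].
Qed.
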